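(* Let $T$ be a tree on at least three vertices and let $S \subseteq V(T)$ satisfy conditions (I) and (II) below. Then every vertex $v \in S$ lies on a path between two leaves $\ell, \ell' \in S$. (I) $S$ contains at least one leaf of $T$. (II) For every leaf $\ell \in S$, every edge $\{a,b\}$ of $T$ with $a$ closer to $\ell$ than $b$ satisfies: (i) if $a,b\notin S$ then $N(b)\cap S=\emptyset$; (ii) if $a\notin S$, $b\in S$ then $|N(b)\cap S|\le 1$; (iii) if $a\in S$, $b\notin S$ then $|(N(b)\cap S)\setminus\{a\}|=1$; (iv) if $a,b\in S$ then $|(N(b)\cap S)\setminus\{a\}|=0$.
   Context: $N(b)$ is the set of neighbors of $b$; distances are graph distances in $T$; a leaf is a vertex of degree one. *)

(* Defs.v *)
From mathcomp Require Import all_boot all_order.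
Set Implicit Arguments. Unset Strict Implicit. Unset Printing Implicit Defensive.

Section Graphs.
Variable T : finType.
Variable e : rel T.

Definition simple_graph := symmetric e /\ irreflexive e.

Definition is_tree :=
  [/\ simple_graph,
      (forall x y : T, connect e x y) &
      (forall p : seq T, ucycle e p -> size p < 3)].

Definition nbhd (b : T) : {set T} := [set y | e b y].

Definition leaf (x : T) : bool := #|nbhd x| == 1.

Fixpoint ball (x : T) (k : nat) : {set T} :=
  if k is k'.+1 then ball x k' :|: [set y | [exists z in ball x k', e z y]]
  else [set x].

(* graph distance (for connected graphs: the least k with y in ball x k;
   distances in a connected graph are < #|T|) *)
Definition gdist (x y : T) : nat := find (fun k => y \in ball x k) (iota 0 #|T|).

Definition on_path_between (x y v : T) : Prop :=
  exists p : seq T, [/\ path e x p, last x p = y, uniq (x :: p) & v \in x :: p].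

End Graphs.

(* Main.v *)
Require Import Defs.
From mathcomp Require Import all_boot all_order.
Set Implicit Arguments. Unset Strict Implicit. Unset Printing Implicit Defensive.

Section Tree.
Variable T : finType.
Variable e : rel T.
Hypothesis esym : symmetric e.
Hypothesis eirr : irreflexive e.
Hypothesis acyc : forall p : seq T, ucycle e p -> size p < 3.

Lemma path_rev x s y : path e x (rcons s y) -> path e y (rcons (rev s) x).
Proof.
rewrite -rev_cons -(belast_rcons x s y) -{2}(last_rcons x s y) rev_path.
by rewrite (eq_path (e' := e)) // => a b; rewrite /= esym.
Qed.

Lemma path_unique x p q : path e x p -> path e x q -> uniq (x :: p) ->
  uniq (x :: q) -> last x p = last x q -> p = q.
Proof.
elim: p x q => [|z p1 IH] x q.
  case: q => [//|z' q1] _ _ _ /= /andP[xq _] H.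
  by move: (mem_last z' q1); rewrite -H (negbTE xq).
case: q => [|z' q1].
  move=> _ _ /= /andP[xp _] _ H.
  by move: (mem_last z p1); rewrite H (negbTE xp).
move=> pp pq up uq hl.
have [ez|nz] := eqVneq z z'.
  subst z'.
  move: pp pq up uq hl => /= /andP[_ pp] /andP[_ pq] /andP[_ up] /andP[_ uq] hl.
  by rewrite (IH z q1).
exfalso.
set p := z :: p1 in pp up hl *.
set q := z' :: q1 in pq uq hl *.
have hasq : has (mem p) q.
  apply/hasP; exists (last x q); first by rewrite /q /= mem_last.
  by rewrite -hl /p /= mem_last.
set j := find (mem p) q.
have jq : j < size q by rewrite -has_find.
set w := nth x q j.
have wp : w \in p by exact: (nth_find x hasq).
set i := index w p.
have ip : i < size p by rewrite index_mem.
set s1 := take i.+1 p.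
set s2 := take j q.
have hs1 : last x s1 = w by rewrite /s1 (take_nth x ip) last_rcons nth_index.
have xnp : x \notin p by case/andP: up.
have xnq : x \notin q by case/andP: uq.
have hc : ucycle e (x :: (s1 ++ rev s2)).
  apply/andP; split.
    rewrite /cycle rcons_path cat_path.
    apply/andP; split; last first.
      have -> : last x (s1 ++ rev s2) = z'.
        rewrite last_cat hs1 /s2 /w.
        case: (j) => [|j'] //=.
        by rewrite rev_cons last_rcons.
      by rewrite esym; move: pq => /= /andP[].
    apply/andP; split.
      by move: pp; rewrite -[p](cat_take_drop i.+1) cat_path => /andP[].
    rewrite hs1.
    suff : path e w (rcons (rev s2) x) by rewrite rcons_path => /andP[].
    apply: path_rev; rewrite /w /s2 -(take_nth x jq).
    by move: pq; rewrite -{1}(cat_take_drop j.+1 q) cat_path => /andP[].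
  rewrite cons_uniq mem_cat mem_rev negb_or cat_uniq rev_uniq has_rev.
  have up1 : uniq p by case/andP: up.
  have uq1 : uniq q by case/andP: uq.
  apply/and3P; split.
  - apply/andP; split; apply/negP => /mem_take; apply/negP => //.
  - by rewrite /s1 take_uniq.
  apply/andP; split; last by rewrite /s2 take_uniq.
  apply/hasP => -[y ys2 ys1].
  move: ys2; rewrite /s2 => /(nthP x) [k].
  rewrite (size_takel (ltnW jq)) => kj.
  rewrite (nth_take _ kj) => hk.
  have := before_find x kj.
  rewrite hk => /negbT/negP; apply.
  exact: (mem_take ys1).
have := acyc hc.
have hsz : size (x :: (s1 ++ rev s2)) = (i + j).+2.
  change (S (size (s1 ++ rev s2)) = S (S (i + j))).
  by rewrite size_cat size_rev /s1 /s2 (size_takel ip) (size_takel (ltnW jq)) addSn.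
rewrite hsz => h.
have /eqP : i + j = 0 by move: h; case: (i + j).
rewrite addn_eq0 => /andP[/eqP i0 /eqP j0].
move: hs1; rewrite /s1 i0 /w j0 => hw.
move/eqP: nz; apply.
by move: hw; rewrite /p /q /= take0.
Qed.

Lemma ballP x k y :
  reflect (exists p, [/\ path e x p, last x p = y & size p <= k]) (y \in ball e x k).
Proof.
elim: k y => [|k IH] y /=.
  rewrite in_set1; apply: (iffP eqP) => [->|[[|? ?] [_ <- //]]].
  by exists [::].
rewrite in_setU in_set; apply: (iffP orP).
  case=> [/IH [p [pp lp sp]]|/existsP [z /andP [/IH [p [pp lp sp]] ezy]]].
    by exists p; split => //; apply: leqW.
  exists (rcons p y); split; first by rewrite rcons_path pp lp.
    by rewrite last_rcons.
  by rewrite size_rcons.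
case=> p [pp lp sp].
have [sk|sk] := leqP (size p) k; first by left; apply/IH; exists p.
right; apply/existsP.
move: pp lp sp sk; case/lastP: p => [|p z] //.
rewrite rcons_path last_rcons size_rcons => /andP[pp ez] <- sp sk.
exists (last x p); apply/andP; split => //.
by apply/IH; exists p.
Qed.

Lemma gdist_path x p : path e x p -> uniq (x :: p) -> gdist e x (last x p) = size p.
Proof.
move=> pp up.
have szT : size p < #|T|.
  by have := max_card (mem (x :: p)); rewrite (card_uniqP up).
have inb : last x p \in ball e x (size p) by apply/ballP; exists p.
have notb : forall k, k < size p -> last x p \notin ball e x k.
  move=> k kp; apply/negP => /ballP [p2 [pp2 lp2 sp2]].
  move: lp2; have [p3 pp3 up3 sub3] := shortenP pp2 => lp3.
  have ep : p3 = p := path_unique pp3 pp up3 up lp3.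
  have : size p3 <= size p2 by apply: uniq_leq_size => //; case/andP: up3.
  rewrite ep => h.
  by have := leq_ltn_trans (leq_trans h sp2) kp; rewrite ltnn.
rewrite /gdist.
set P := (fun k => _).
have hasP' : has P (iota 0 #|T|).
  by apply/hasP; exists (size p); rewrite ?mem_iota //.
have fl : find P (iota 0 #|T|) < #|T| by rewrite -[X in _ < X](size_iota 0) -has_find.
have := nth_find 0 hasP'; rewrite /P nth_iota // add0n => hb.
have [lt|gt|//] := ltngtP (find P (iota 0 #|T|)) (size p).
  by move: hb; rewrite (negbTE (notb _ lt)).
have := before_find 0 gt; rewrite /P nth_iota // add0n inb //.

Qed.

Lemma prefix_last (x : T) (s : seq T) (c : T) : c \in x :: s -> exists t u, s = t ++ u /\ last x t = c.
Proof.
elim: s x => [|y s IH] x; rewrite in_cons.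
  by case/orP => [/eqP ->|//]; exists [::], [::].
case/orP => [/eqP ->|]; first by exists [::], (y :: s).
move/IH => [t [u [-> <-]]]; by exists (y :: t), u.
Qed.

Lemma nbr_notin (l : T) (p' : seq T) (b c : T) : path e l (rcons p' b) -> uniq (l :: rcons p' b) ->
  e b c -> c != last l p' -> c \notin l :: rcons p' b.
Proof.
move=> pp up ebc nc; apply/negP => cin.
have cb : c != b by apply/eqP => cb; move: ebc; rewrite cb eirr.
have cin' : c \in l :: p'.
  by move: cin; rewrite !in_cons mem_rcons in_cons (negbTE cb).
have [t [u [ep lt]]] := prefix_last cin'.
have pt : path e l (rcons t b).
  move: pp; rewrite ep !rcons_path cat_path last_cat lt => /andP[/andP[-> _] _] /=.
  by rewrite esym.
have ut : uniq (l :: rcons t b).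
  apply: subseq_uniq up; rewrite ep rcons_cat -cat_cons.
  rewrite -cats1 -cat_cons.   apply: cat_subseq; first exact: subseq_refl.
  by rewrite sub1seq mem_rcons mem_head.
have hl : last l (rcons t b) = last l (rcons p' b) by rewrite !last_rcons.
have := path_unique pt pp ut up hl => /rcons_inj [et].
by move/eqP: nc; apply; rewrite -et.
Qed.

Variable S : {set T}.
Variable l : T.
Hypothesis H3 : forall a b, e a b -> gdist e l a < gdist e l b -> a \in S -> b \notin S ->
  #|(nbhd e b :&: S) :\ a| = 1.

Lemma descend n : forall p' b, #|T| - size p' <= n -> path e l (rcons p' b) ->
  uniq (l :: rcons p' b) -> (last l p' \in S) || (b \in S) ->
  exists r, [/\ path e l (rcons p' b ++ r), uniq (l :: rcons p' b ++ r),
              last b r \in S & leaf e (last b r)].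
Proof.
elim: n => [|n IH] p' b hn pp up inv.
  have := max_card (mem (l :: rcons p' b)); rewrite (card_uniqP up) /= size_rcons.
  by move: hn; rewrite leqn0 subn_eq0 => h1 h2; have := leq_ltn_trans h1 (ltnW h2); rewrite ltnn.
have [/andP[bS lb]|nfin] := boolP ((b \in S) && leaf e b).
  by exists [::]; rewrite cats0 /= bS lb; split.
set a := last l p'.
have eab : e a b by move: pp; rewrite rcons_path => /andP[].
have pp' : path e l p' by move: pp; rewrite rcons_path => /andP[].
have up' : uniq (l :: p') by apply: subseq_uniq up; rewrite -cats1 -cat_cons prefix_subseq.
have ga : gdist e l a = size p' by apply: gdist_path.
have gb : gdist e l b = (size p').+1 by have := gdist_path pp up; rewrite last_rcons size_rcons.
have [c [ebc ca cond]] : exists c, [/\ e b c, c != a & (b \in S) || (c \in S)].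
  case: (boolP (b \in S)) => bS.
    have nl : ~~ leaf e b by move: nfin; rewrite bS.
    have an : a \in nbhd e b by rewrite in_set esym.
    have : #|nbhd e b :\ a| != 0.
      by move: nl; rewrite /leaf (cardsD1 a) an; apply: contra => /eqP ->.
    rewrite -lt0n card_gt0 => /set0Pn [c]; rewrite !inE => /andP[ca ebc].
    by exists c; split.
  have aS : a \in S by move: inv; rewrite (negbTE bS) orbF.
  have := H3 eab; rewrite ga gb ltnSn => /(_ isT aS bS) h.
  have : 0 < #|(nbhd e b :&: S) :\ a| by rewrite h.
  rewrite card_gt0 => /set0Pn [c]; rewrite !inE => /and3P[ca ebc cS].
  by exists c; split => //; rewrite cS orbT.
have cn := nbr_notin pp up ebc ca.
have pp2 : path e l (rcons (rcons p' b) c) by rewrite rcons_path pp last_rcons.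
have up2 : uniq (l :: rcons (rcons p' b) c).
  by rewrite -cats1 -cat_cons cat_uniq up /= orbF andbT.
have hn2 : #|T| - size (rcons p' b) <= n by rewrite size_rcons subnS; move: hn; case: (#|T| - size p').
have inv2 : (last l (rcons p' b) \in S) || (c \in S) by rewrite last_rcons.
have [r [pr ur lr fr]] := IH _ _ hn2 pp2 up2 inv2.
exists (c :: r); split => //.
- by move: pr; rewrite cat_rcons.
- by move: ur; rewrite cat_rcons.
Qed.
End Tree.

Theorem mainTheorem9 (T : finType) (e : rel T) (S : {set T}) :
  is_tree e -> 3 <= #|T| ->
  (* (I) *)
  (exists l, l \in S /\ leaf e l) ->
  (* (II) *)
  (forall l a b, l \in S -> leaf e l -> e a b -> gdist e l a < gdist e l b ->
     [/\ (a \notin S -> b \notin S -> nbhd e b :&: S = set0),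
         (a \notin S -> b \in S -> #|nbhd e b :&: S| <= 1),
         (a \in S -> b \notin S -> #|(nbhd e b :&: S) :\ a| = 1) &
         (a \in S -> b \in S -> #|(nbhd e b :&: S) :\ a| = 0)]) ->
  forall v, v \in S ->
    exists l l', [/\ l \in S /\ l' \in S, leaf e l, leaf e l', l != l' &
                     on_path_between e l l' v].
Proof.
move=> [[esym eirr] conn acyc] _ [l [lS ll]] HII v vS.
have H3 : forall a b, e a b -> gdist e l a < gdist e l b -> a \in S -> b \notin S ->
    #|(nbhd e b :&: S) :\ a| = 1.
  by move=> a b eab gab aS bS; have [_ _ h _] := HII l a b lS ll eab gab; apply: h.
have D := descend esym eirr acyc H3 (leqnn _).
have [p' [b [pp up vin inv]]] : exists p' b, [/\ path e l (rcons p' b), uniq (l :: rcons p' b),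
    v \in l :: rcons p' b & (last l p' \in S) || (b \in S)].
  move/connectP: (conn l v) => [p0 pp0 lp0].
  move: lp0; have [p1 pp1 up1 _] := shortenP pp0 => lp0.
  case/lastP: p1 pp1 up1 lp0 => [|p1 b] pp1 up1 lp0.
    have : #|nbhd e l| = 1 by apply/eqP.
    move/eqP/cards1P => [c hc].
    have elc : e l c by move: (set11 c); rewrite -hc in_set.
    exists [::], c; split => //=.
    - by rewrite elc.
    - by rewrite andbT inE; apply/eqP => lc; move: elc; rewrite -lc eirr.
    - by rewrite lp0 /= mem_head.
    - by rewrite lS.
  exists p1, b; split => //.
    by rewrite lp0 mem_last.
  by move: vS; rewrite lp0 last_rcons => ->; rewrite orbT.
have [r [pr ur lr fr]] := D p' b pp up inv.
exists l, (last b r); split => //.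
  apply/eqP => el.
  move: ur; rewrite /= => /andP[/negP nl _]; apply: nl.
  by move: (mem_last b r); rewrite el in_cons mem_cat mem_rcons in_cons => /orP[->|->]; rewrite ?orbT.
exists (rcons p' b ++ r); split => //.
- by rewrite last_cat last_rcons.
- by move: vin; rewrite !in_cons mem_cat => /orP[->|->]; rewrite ?orbT.
Qed.
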